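(* Let $V$ be a finite-dimensional complex vector space with a Hermitian inner product, $\mathbf G$ a finite group of unitary transformations of $V$, $\mathbf x_0\in V$ a unit vector with full orbit under $\mathbf G$, and consider the subgroup sequence $\{I\}<\mathbf G_1<\mathbf G$ with coset leader sets $\operatorname{CL}(\mathbf G_1/\{I\})=\mathbf G_1$ and $\operatorname{CL}(\mathbf G/\mathbf G_1)$. Then the subgroup decoding algorithm decodes correctly (with some noise) if and only if every element of $\operatorname{CL}(\mathbf G/\mathbf G_1)$ is minimal.
   Context: Full orbit: $|\mathbf G\mathbf x_0|=|\mathbf G|$. $\operatorname{CL}(\mathbf G/\mathbf G_1)$ is a set of representatives of the left cosets of $\mathbf G_1$ in $\mathbf G$ containing $I$. Subgroup decoding algorithm: given $\mathbf r$, choose $d_1\in\mathbf G_1$ minimizing $\|a\mathbf r-\mathbf x_0\|$ over $a\in\mathbf G_1$, then $d_2\in\operatorname{CL}(\mathbf G/\mathbf G_1)$ minimizing $\|a d_1\mathbf r-\mathbf x_0\|$ (ties broken by a fixed ordering); output $d_2d_1$. It decodes correctly with some noise if there is $\delta>0$ such that for all $g\in\mathbf G$ and $\mathbf r$ with $\|\mathbf r-g^{-1}\mathbf x_0\|<\delta$ the output is $g$. For a subgroup $H$, $\operatorname{FR}(H)=\{\mathbf x:\|\mathbf x-\mathbf x_0\|<\|h\mathbf x-\mathbf x_0\|\ \forall h\in H\setminus\operatorname{Stab}_H(\mathbf x_0)\}$. A coset representative $c$ of $\mathbf G_1$ in $\mathbf G$ is minimal if $\mathbf x_0\in c(\operatorname{FR}(\mathbf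 G_1))$. *)

(* Defs.v *)
From HB Require Import structures.
From mathcomp Require Import all_boot all_order all_algebra all_fingroup.
From mathcomp Require Import reals.
From mathcomp Require Import complex.
Set Implicit Arguments. Unset Strict Implicit. Unset Printing Implicit Defensive.
Import Order.TTheory GRing.Theory Num.Theory.
Local Open Scope ring_scope.

(* V = C^n (column vectors) with the standard Hermitian inner product. *)

Definition vnorm (R : realType) (n : nat) (v : 'cV[R[i]]_n) : R :=
  Num.sqrt (\sum_(i < n) (Normc.normc (v i ord0)) ^+ 2).

Definition adjmx (R : realType) (n : nat) (A : 'M[R[i]]_n) : 'M[R[i]]_n :=
  map_mx (@conjc R) A^T.

Definition unitary (R : realType) (n : nat) (A : 'M[R[i]]_n) : Prop :=
  adjmx A *m A = 1%:M.

(* G is a finite group of unitary transformations of V: an abstract finite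
   group G acting faithfully by unitary matrices through rho. *)
Definition unitary_group (R : realType) (n : nat) (gT : finGroupType)
    (G : {group gT}) (rho : gT -> 'M[R[i]]_n) : Prop :=
  [/\ {in G &, forall g h, rho (g * h)%g = rho g *m rho h},
      {in G &, injective rho} &
      {in G, forall g, unitary (rho g)}].

Definition act (R : realType) (n : nat) (gT : finGroupType)
    (rho : gT -> 'M[R[i]]_n) (g : gT) (x : 'cV[R[i]]_n) : 'cV[R[i]]_n :=
  rho g *m x.

(* full orbit: |G x0| = |G| *)
Definition full_orbit (R : realType) (n : nat) (gT : finGroupType)
    (G : {group gT}) (rho : gT -> 'M[R[i]]_n) (x0 : 'cV[R[i]]_n) : Prop :=
  {in G &, injective (fun g => act rho g x0)}.

Definition coset_leaders (gT : finGroupType) (G G1 : {group gT})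
    (CL : {set gT}) : Prop :=
  [/\ CL \subset G, (1%g \in CL) &
      forall C, C \in lcosets G1 G -> #|CL :&: C| = 1%N].

Definition is_argmin (R : realType) (gT : finGroupType) (S : {set gT})
    (f : gT -> R) (rk : gT -> nat) (a : gT) : Prop :=
  a \in S /\
  forall b, b \in S -> f a < f b \/ (f a = f b /\ (rk a <= rk b)%N).

Definition subgroup_decode (R : realType) (n : nat) (gT : finGroupType)
    (G1 : {group gT}) (CL : {set gT}) (rho : gT -> 'M[R[i]]_n)
    (x0 : 'cV[R[i]]_n) (rk : gT -> nat) (r : 'cV[R[i]]_n) (d : gT) : Prop :=
  exists d1 d2,
    [/\ is_argmin (G1 : {set gT}) (fun a => vnorm (act rho a r - x0)) rk d1,
        is_argmin CL (fun a => vnorm (act rho a (act rho d1 r) - x0)) rk d2 &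
        d = (d2 * d1)%g].

Definition decodes_correctly (R : realType) (n : nat) (gT : finGroupType)
    (G G1 : {group gT}) (CL : {set gT}) (rho : gT -> 'M[R[i]]_n)
    (x0 : 'cV[R[i]]_n) (rk : gT -> nat) : Prop :=
  exists2 delta : R, 0 < delta &
    forall g r, g \in G -> vnorm (r - act rho g^-1 x0) < delta ->
      forall d, subgroup_decode G1 CL rho x0 rk r d -> d = g.

Definition stab (R : realType) (n : nat) (gT : finGroupType)
    (H : {set gT}) (rho : gT -> 'M[R[i]]_n) (x0 : 'cV[R[i]]_n) : {set gT} :=
  [set h in H | act rho h x0 == x0].

Definition in_FR (R : realType) (n : nat) (gT : finGroupType)
    (H : {set gT}) (rho : gT -> 'M[R[i]]_n) (x0 x : 'cV[R[i]]_n) : Prop :=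
  forall h, h \in H -> h \notin stab H rho x0 ->
    vnorm (x - x0) < vnorm (act rho h x - x0).

Definition minimal_rep (R : realType) (n : nat) (gT : finGroupType)
    (G1 : {group gT}) (rho : gT -> 'M[R[i]]_n) (x0 : 'cV[R[i]]_n) (c : gT) :
    Prop :=
  exists y, in_FR (G1 : {set gT}) rho x0 y /\ act rho c y = x0.

(* Main.v *)
Require Import Defs.
From HB Require Import structures.
From mathcomp Require Import all_boot all_order all_algebra all_fingroup.
From mathcomp Require Import reals.
From mathcomp Require Import complex.
From mathcomp Require Import ring lra.
From Stdlib Require Classical_Prop.
Import Order.TTheory GRing.Theory Num.Theory.
Set Implicit Arguments.
Unset Strict Implicit.
Local Open Scope ring_scope.
Local Open Scope complex_scope.

Section Norms.
Variable R : realType.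
Variable n : nat.
Implicit Types u v w : 'cV[R[i]]_n.

Definition sq v : R := \sum_(i < n) (Normc.normc (v i ord0)) ^+ 2.
Definition dot u v : R[i] := \sum_(i < n) conjc (u i ord0) * v i ord0.

Lemma normc2 (z : R[i]) : ((Normc.normc z) ^+ 2)%:C = conjc z * z.
Proof.
case: z => a b /=. rewrite sqr_sqrtr ?addr_ge0 ?sqr_ge0 //.
apply/eqP; rewrite eq_complex /=; apply/andP; split; apply/eqP; ring.
Qed.

Lemma sq_dot v : (sq v)%:C = dot v v.
Proof. by rewrite /sq rmorph_sum; apply: eq_bigr => i _; exact: normc2. Qed.

Lemma normc_ge0 (z : R[i]) : 0 <= Normc.normc z.
Proof. by case: z => ? ? /=; apply: sqrtr_ge0. Qed.

Lemma sq_ge0 v : 0 <= sq v.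
Proof. by apply: sumr_ge0 => i _; rewrite sqr_ge0. Qed.

Lemma vnorm_ge0 v : 0 <= vnorm v.
Proof. exact: sqrtr_ge0. Qed.

Lemma vnorm_sq v : vnorm v ^+ 2 = sq v.
Proof. by rewrite /vnorm sqr_sqrtr // sq_ge0. Qed.

Lemma dotE u v : dot u v = ((map_mx conjc u)^T *m v) ord0 ord0.
Proof. by rewrite /dot mxE; apply: eq_bigr => i _; rewrite !mxE. Qed.

Lemma dot_unitary (A : 'M[R[i]]_n) u v : unitary A -> dot (A *m u) (A *m v) = dot u v.
Proof.
move=> hA; rewrite !dotE map_mxM trmx_mul -mulmxA [X in _ *m X]mulmxA.
have -> : (map_mx conjc A)^T = adjmx A by rewrite /adjmx map_trmx.
by rewrite hA mul1mx.
Qed.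

Lemma sq_unitary (A : 'M[R[i]]_n) v : unitary A -> sq (A *m v) = sq v.
Proof. by move=> hA; apply: complexI; rewrite !sq_dot dot_unitary. Qed.

Lemma vnorm_unitary (A : 'M[R[i]]_n) v : unitary A -> vnorm (A *m v) = vnorm v.
Proof. by move=> hA; rewrite /vnorm -/(sq _) sq_unitary. Qed.

Lemma vnormN v : vnorm (- v) = vnorm v.
Proof. by rewrite /vnorm; congr Num.sqrt; apply: eq_bigr => i _; rewrite mxE normcN. Qed.

Lemma vnormB u v : vnorm (u - v) = vnorm (v - u).
Proof. by rewrite -vnormN opprB. Qed.

Lemma vnorm_eq0 v : vnorm v = 0 -> v = 0.
Proof.
move=> /eqP; rewrite sqrtr_eq0 => h.
have h0 : sq v = 0 by apply/eqP; rewrite eq_le h sq_ge0.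
move/eqP: h0; rewrite psumr_eq0 => [/allP hall|i _]; last by rewrite sqr_ge0.
apply/matrixP => i j; rewrite (ord1 j) mxE.
have := hall i (mem_index_enum i); rewrite implyTb sqrf_eq0 => /eqP.
exact: Normc.eq0_normc.
Qed.

Lemma normcR (t : R) : Normc.normc (t%:C) = `|t|.
Proof. by rewrite /= expr0n /= addr0 sqrtr_sqr. Qed.

Lemma vnormZ (t : R) v : vnorm (t%:C *: v) = `|t| * vnorm v.
Proof.
rewrite /vnorm -sqrtr_sqr -sqrtrM ?sqr_ge0 // mulr_sumr; congr Num.sqrt.
by apply: eq_bigr => i _; rewrite !mxE Normc.normcM normcR exprMn real_normK ?num_real //.
Qed.


Lemma sumsq0 (a : 'I_n -> R) : Num.sqrt (\sum_i a i ^+ 2) = 0 -> forall i, a i = 0.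
Proof.
move=> /eqP; rewrite sqrtr_eq0 => h i.
have h0 : \sum_i a i ^+ 2 = 0.
  by apply/eqP; rewrite eq_le h sumr_ge0 // => j _; rewrite sqr_ge0.
move/eqP: h0; rewrite psumr_eq0 => [/allP hall|j _]; last by rewrite sqr_ge0.
by have := hall i (mem_index_enum i); rewrite implyTb sqrf_eq0 => /eqP.
Qed.

Lemma cs_real (a b : 'I_n -> R) :
  \sum_i a i * b i <= Num.sqrt (\sum_i a i ^+ 2) * Num.sqrt (\sum_i b i ^+ 2).
Proof.
set A := \sum_i a i ^+ 2; set B := \sum_i b i ^+ 2; set S := \sum_i a i * b i.
have A0 : 0 <= A by apply: sumr_ge0 => i _; rewrite sqr_ge0.
have B0 : 0 <= B by apply: sumr_ge0 => i _; rewrite sqr_ge0.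
set x := Num.sqrt B; set y := Num.sqrt A.
have hx : x ^+ 2 = B by rewrite sqr_sqrtr.
have hy : y ^+ 2 = A by rewrite sqr_sqrtr.
have hexp : \sum_i (x * a i - y * b i) ^+ 2 = x ^+ 2 * A - 2 * x * y * S + y ^+ 2 * B.
  rewrite /A /B /S !mulr_sumr -sumrB -big_split /=; apply: eq_bigr => i _; ring.
have hpos : 0 <= \sum_i (x * a i - y * b i) ^+ 2 by apply: sumr_ge0 => i _; rewrite sqr_ge0.
rewrite hexp hx hy -hx -hy in hpos.
have x0 : 0 <= x by apply: sqrtr_ge0.
have y0 : 0 <= y by apply: sqrtr_ge0.
have [xy0|] := ltP 0 (x * y).
  rewrite mulrC; nra.
rewrite le_eqVlt => /orP [/eqP xy|]; last by rewrite ltNge mulr_ge0.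
move/eqP: xy; rewrite mulf_eq0 => /orP [/eqP|/eqP] h.
  rewrite /S (eq_bigr (fun _ => 0)) ?big1 // ?mulr_ge0 // => i _.
  by rewrite (@sumsq0 b h i) mulr0.
rewrite /S (eq_bigr (fun _ => 0)) ?big1 // ?mulr_ge0 // => i _.
by rewrite (@sumsq0 a h i) mul0r.
Qed.

Lemma vnormD u v : vnorm (u + v) <= vnorm u + vnorm v.
Proof.
set a := fun i => Normc.normc (u i ord0); set b := fun i => Normc.normc (v i ord0).
have a0 : forall i, 0 <= a i by move=> i; rewrite /a; case: (u i ord0) => ? ? /=; apply: sqrtr_ge0.
have b0 : forall i, 0 <= b i by move=> i; rewrite /b; case: (v i ord0) => ? ? /=; apply: sqrtr_ge0.
rewrite -(ger0_norm (vnorm_ge0 _)) -[X in _ <= X]ger0_norm ?addr_ge0 ?vnorm_ge0 //.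
rewrite -ler_sqr ?nnegrE ?normr_ge0 // !real_normK ?num_real // vnorm_sq /sq.
apply: (@le_trans _ _ (\sum_i (a i + b i) ^+ 2)).
  apply: ler_sum => i _; rewrite !mxE ler_sqr ?nnegrE ?addr_ge0 ?normc_ge0 //.
  exact: le_normcD.
have hcs := cs_real a b.
have -> : \sum_i (a i + b i) ^+ 2 = \sum_i a i ^+ 2 + \sum_i b i ^+ 2 + 2 * \sum_i a i * b i.
  rewrite mulr_sumr -!big_split /=; apply: eq_bigr => i _; ring.
rewrite sqrrD.
have hA : vnorm u ^+ 2 = \sum_i a i ^+ 2 by rewrite vnorm_sq.
have hB : vnorm v ^+ 2 = \sum_i b i ^+ 2 by rewrite vnorm_sq.
rewrite -hA -hB; rewrite /vnorm -/(sq u) -/(sq v).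
have hcs2 : \sum_i a i * b i <= Num.sqrt (sq u) * Num.sqrt (sq v) := hcs.
rewrite mulr2n; lra.
Qed.

Lemma dotDl u v w : dot (u + v) w = dot u w + dot v w.
Proof. by rewrite /dot -big_split; apply: eq_bigr => i _; rewrite !mxE rmorphD mulrDl. Qed.
Lemma dotDr u v w : dot u (v + w) = dot u v + dot u w.
Proof. by rewrite /dot -big_split; apply: eq_bigr => i _; rewrite !mxE mulrDr. Qed.
Lemma dotNl u w : dot (- u) w = - dot u w.
Proof. by rewrite /dot -sumrN; apply: eq_bigr => i _; rewrite !mxE rmorphN mulNr. Qed.
Lemma dotNr u w : dot u (- w) = - dot u w.
Proof. by rewrite /dot -sumrN; apply: eq_bigr => i _; rewrite !mxE mulrN. Qed.
Lemma dotBl u v w : dot (u - v) w = dot u w - dot v w.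
Proof. by rewrite dotDl dotNl. Qed.
Lemma dotBr u v w : dot u (v - w) = dot u v - dot u w.
Proof. by rewrite dotDr dotNr. Qed.
Lemma dotZl (t : R) u w : dot (t%:C *: u) w = t%:C * dot u w.
Proof.
rewrite /dot mulr_sumr; apply: eq_bigr => i _; rewrite !mxE rmorphM mulrA.
by congr (_ * _ * _); exact: conjc_real.
Qed.
Lemma dotZr (t : R) u w : dot u (t%:C *: w) = t%:C * dot u w.
Proof. by rewrite /dot mulr_sumr; apply: eq_bigr => i _; rewrite !mxE mulrCA. Qed.

Lemma RC_D (x y : R) : (x + y)%:C = x%:C + y%:C.
Proof. exact: rmorphD. Qed.
Lemma RC_B (x y : R) : (x - y)%:C = x%:C - y%:C.
Proof. exact: rmorphB. Qed.
Lemma RC_N (x : R) : (- x)%:C = - x%:C.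
Proof. exact: rmorphN. Qed.
Lemma RC_M (x y : R) : (x * y)%:C = x%:C * y%:C.
Proof. exact: rmorphM. Qed.
Lemma RC_2 : (2 : R)%:C = 2.
Proof. exact: (rmorph_nat _ 2). Qed.

Lemma key_ineq p q (t : R) : 0 < t -> sq q <= sq p -> p != q ->
  sq (q + t%:C *: (p - q)) < sq (p + t%:C *: (p - q)).
Proof.
move=> t0 hqp hpq.
have hC : (sq (p + t%:C *: (p - q)) - sq (q + t%:C *: (p - q)))%:C =
          (sq p - sq q + 2 * t * sq (p - q))%:C.
  rewrite !(RC_D, RC_N, RC_M, RC_2) !sq_dot.
  rewrite !(dotDl, dotDr, dotNl, dotNr, dotZl, dotZr); ring.
have hu : 0 < sq (p - q).
  rewrite lt_def sq_ge0 andbT; apply/eqP => h0.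
  move/eqP: hpq; apply; apply/eqP; rewrite -subr_eq0; apply/eqP.
  by apply: vnorm_eq0; rewrite /vnorm -/(sq _) h0 sqrtr0.
have := complexI hC; nra.
Qed.

End Norms.

Section Utils.
Variable R : realType.

Lemma pos_lb (T : finType) (P : pred T) (F : T -> R) :
  (forall x, P x -> 0 < F x) -> exists2 e, 0 < e & forall x, P x -> e <= F x.
Proof.
move=> hF.
suff: forall s : seq T, exists2 e, 0 < e & forall x, x \in s -> P x -> e <= F x.
  by case/(_ (enum T)) => e e0 he; exists e => // x Px; apply: he; rewrite ?mem_enum.
elim=> [|x s [e e0 he]]; first by exists 1.
case Px: (P x).
  exists (Num.min e (F x)); first by rewrite lt_min e0 hF.
  move=> y; rewrite in_cons => /orP [/eqP -> _|ys Py]; first by rewrite ge_min lexx orbT.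
  by rewrite ge_min he.
exists e => // y; rewrite in_cons => /orP [/eqP -> |ys Py]; first by rewrite Px.
exact: he.
Qed.

Lemma argmin_ex (gT : finGroupType) (S : {set gT}) (f : gT -> R) (rk : gT -> nat) x :
  x \in S -> exists a, is_argmin S f rk a.
Proof.
move=> xS.
pose lex a b := f a < f b \/ (f a = f b /\ (rk a <= rk b)%N).
have tot : forall a b, lex a b \/ lex b a.
  move=> a b; rewrite /lex; case: (ltgtP (f a) (f b)) => h; [by left; left|by right; left|].
  by case: (leqP (rk a) (rk b)) => h2; [left; right|right; right; split=> //; apply: ltnW].
have trans : forall a b c, lex a b -> lex b c -> lex a c.
  move=> a b c; rewrite /lex => [[h1|[h1 h2]] [h3|[h3 h4]]].
  - by left; apply: lt_trans h3.
  - by left; rewrite -h3.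
  - by left; rewrite h1.
  - by right; split; [rewrite h1|apply: leq_trans h4].
suff: forall s : seq gT, s != [::] -> exists2 a, a \in s & forall b, b \in s -> lex a b.
  case/(_ (enum S)) => [|a]; first by apply/eqP => h; move: xS; rewrite -mem_enum h.
  by rewrite mem_enum => aS ha; exists a; split=> // b bS; apply: ha; rewrite mem_enum bS.
elim=> [|x0 s IH] hs; first by rewrite eqxx in hs.
clear hs; case: s IH => [|y s] IH.
  exists x0; rewrite ?mem_head // => b; rewrite inE => /eqP ->.
  by right; split.
case: IH => // a aS ha.
case: (tot x0 a) => hx.
  exists x0; rewrite ?mem_head // => b; rewrite in_cons => /orP [/eqP ->|bs].
    by right; split.
  exact: trans hx (ha b bs).
exists a; first by rewrite in_cons aS orbT.
move=> b; rewrite in_cons => /orP [/eqP ->|bs]; [exact: hx|exact: ha].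
Qed.

End Utils.

Section Grp.
Variables (R : realType) (n : nat) (gT : finGroupType) (G : {group gT}).
Variable rho : gT -> 'M[R[i]]_n.
Hypothesis hU : unitary_group G rho.

Lemma rho1 : rho 1%g = 1%:M.
Proof.
case: hU => hM _ hu.
have h1 := hM 1%g 1%g (group1 G) (group1 G); rewrite mulg1 in h1.
have := hu 1%g (group1 G); rewrite /unitary => hA.
transitivity (adjmx (rho 1) *m rho 1 *m rho 1); first by rewrite hA mul1mx.
by rewrite -mulmxA -h1 hA.
Qed.

Lemma actM g h x : g \in G -> h \in G -> Defs.act rho g (Defs.act rho h x) = Defs.act rho (g * h) x.
Proof. by case: hU => hM _ _ gG hG; rewrite /Defs.act mulmxA hM. Qed.

Lemma act1 x : Defs.act rho 1 x = x.
Proof. by rewrite /Defs.act rho1 mul1mx. Qed.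

Lemma actKV g x : g \in G -> Defs.act rho g^-1 (Defs.act rho g x) = x.
Proof. by move=> gG; rewrite actM ?groupV // mulVg act1. Qed.

Lemma actVK g x : g \in G -> Defs.act rho g (Defs.act rho g^-1 x) = x.
Proof. by move=> gG; rewrite actM ?groupV // mulgV act1. Qed.

Lemma act_vnorm g x : g \in G -> vnorm (Defs.act rho g x) = vnorm x.
Proof. by case: hU => _ _ hu gG; rewrite /Defs.act vnorm_unitary //; apply: hu. Qed.

Lemma actB g x y : Defs.act rho g (x - y) = Defs.act rho g x - Defs.act rho g y.
Proof. by rewrite /Defs.act mulmxBr. Qed.

Lemma actD g x y : Defs.act rho g (x + y) = Defs.act rho g x + Defs.act rho g y.
Proof. by rewrite /Defs.act mulmxDr. Qed.

End Grp.

Lemma vnorm_tri (R : realType) (n : nat) (X E : 'cV[R[i]]_n) :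
  vnorm X - vnorm E <= vnorm (X + E) /\ vnorm (X + E) <= vnorm X + vnorm E.
Proof.
split; last exact: vnormD.
have := (@vnormD _ _ (X + E) (- E)); rewrite vnormN addrK; lra.
Qed.

Lemma arith1 (R : realType) (nu m e A B fh fd : R) : nu < m / 2 -> m <= e ->
  e <= B - A -> fh <= nu + A -> B - nu <= fd -> fd <= fh -> False.
Proof. lra. Qed.

Lemma arith2 (R : realType) (nu m e B fd fc : R) : nu < m / 2 -> m <= e ->
  e <= B -> B - nu <= fd -> fd <= fc -> fc = nu -> False.
Proof. lra. Qed.

Unset Implicit Arguments.

Local Notation NNPP := Classical_Prop.NNPP.

Theorem mainTheorem11 (R : realType) (n : nat) (gT : finGroupType)
    (G G1 : {group gT}) (rho : gT -> 'M[R[i]]_n) (x0 : 'cV[R[i]]_n)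
    (CL : {set gT}) (rk : gT -> nat) :
  unitary_group G rho ->
  vnorm x0 = 1 ->
  full_orbit G rho x0 ->
  (1%G : {group gT}) \proper G1 -> G1 \proper G ->
  coset_leaders G G1 CL ->
  injective rk ->
  decodes_correctly G G1 CL rho x0 rk <->
  (forall c, c \in CL -> minimal_rep G1 rho x0 c).
Proof.
move=> hU hx0 hfo _ hG1 [CLG CL1 hCL] _.
have sG1 := proper_sub hG1.
have neq1 : forall g, g \in G -> g != 1%g -> Defs.act rho g x0 != x0.
  move=> g gG; apply: contraNneq => h; apply/eqP.
  by apply: hfo => //; rewrite /= h (act1 hU).
have cos_ex : forall g, g \in G -> exists2 c, c \in CL & (c^-1 * g)%g \in G1.
  move=> g gG.
  have : #|CL :&: (g *: G1)%g| == 1%N by rewrite hCL //; apply/lcosetsP; exists g.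
  case/cards1P => c hc.
  have : c \in CL :&: (g *: G1)%g by rewrite hc set11.
  rewrite inE mem_lcoset => /andP [cCL h]; exists c => //.
  by rewrite -[X in X \in _]invgK invMg invgK groupV.
have cos_un : forall c c', c \in CL -> c' \in CL -> (c^-1 * c')%g \in G1 -> c = c'.
  move=> c c' cCL c'CL h.
  have cG : c \in G by apply: (subsetP CLG).
  have : #|CL :&: (c *: G1)%g| == 1%N by rewrite hCL //; apply/lcosetsP; exists c.
  case/cards1P => x hx.
  have : c \in CL :&: (c *: G1)%g by rewrite inE cCL mem_lcoset mulVg group1.
  have : c' \in CL :&: (c *: G1)%g by rewrite inE c'CL mem_lcoset.
  by rewrite hx !inE => /eqP -> /eqP ->.
split.
- case=> delta d0 hdec c cCL.
  have cG : c \in G by apply: (subsetP CLG).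
  apply: NNPP => nm.
  set y := Defs.act rho c^-1 x0.
  have nFR : ~ in_FR G1 rho x0 y.
    by move=> hFR; apply: nm; exists y; split => //; rewrite /y (actVK hU).
  have [b [bG1 bns hb]] : exists b, [/\ b \in G1, b \notin stab G1 rho x0 &
      vnorm (Defs.act rho b y - x0) <= vnorm (y - x0)].
    apply: NNPP => hne; apply: nFR => b bG1 bns.
    rewrite ltNge; apply/negP => hle; apply: hne; by exists b; split.
  have bG : b \in G by apply: (subsetP sG1).
  have b1 : b != 1%g.
    by apply: contraNneq bns => ->; rewrite /stab inE group1 (act1 hU) eqxx.
  set w := Defs.act rho b^-1 x0.
  have wx0 : w != x0 by apply: neq1; rewrite ?groupV ?invg_eq1.
  set p := y - x0; set q := y - w.
  have pq : p != q.
    apply: contra wx0 => /eqP h; apply/eqP; symmetry; apply: oppr_inj.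
    exact: (addrI y).
  have hq : vnorm q = vnorm (Defs.act rho b y - x0).
    by rewrite -(act_vnorm hU _ bG) /q actB /w (actVK hU).
  have sqle : sq q <= sq p.
    by rewrite -!vnorm_sq ler_sqr ?nnegrE ?vnorm_ge0 // hq.
  have u0 : 0 < vnorm (p - q).
    rewrite lt_def vnorm_ge0 andbT; apply/eqP => h0.
    by move/eqP: pq; apply; apply/eqP; rewrite -subr_eq0; apply/eqP; apply: vnorm_eq0.
  set t := delta / (2 * vnorm (p - q)).
  have t0 : 0 < t by rewrite /t divr_gt0 // mulr_gt0.
  set r := y + t%:C *: (p - q).
  have hr1 : r - x0 = p + t%:C *: (p - q) by rewrite /r /p addrAC.
  have hr2 : r - w = q + t%:C *: (p - q) by rewrite /r /q addrAC.
  have key := key_ineq t0 sqle pq.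
  have kv : vnorm (r - w) < vnorm (r - x0).
    rewrite hr1 hr2 -ltr_sqr ?nnegrE ?vnorm_ge0 // !vnorm_sq //.
  have noise : vnorm (r - Defs.act rho c^-1 x0) < delta.
    rewrite -/y /r addrAC subrr add0r vnormZ ger0_norm ?ltW //.
    have -> : t * vnorm (p - q) = delta / 2.
      by rewrite /t; field; rewrite gt_eqF.
    lra.
  have [d1 hd1] := argmin_ex (fun a => vnorm (Defs.act rho a r - x0)) rk (group1 G1).
  have [d2 hd2] := argmin_ex (fun a => vnorm (Defs.act rho a (Defs.act rho d1 r) - x0))
     rk CL1.
  have hd : (d2 * d1)%g = c by apply: (hdec c r cG noise); exists d1, d2; split.
  case: hd1 => d1G1 hm1; case: hd2 => d2CL _.
  have d11 : d1 != 1%g.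
    apply/eqP => e1; have := hm1 b bG1; rewrite e1 (act1 hU) /=.
    have -> : Defs.act rho b r - x0 = Defs.act rho b (r - w) by rewrite actB /w (actVK hU).
    rewrite (act_vnorm hU) //.
    by case=> [h|[h _]]; [move: (lt_trans h kv)|move: kv; rewrite h]; rewrite ltxx.
  have d2c : c = d2.
    apply: cos_un => //.
    by rewrite -hd invMg -mulgA mulVg mulg1 groupV.
  move: hd; rewrite -d2c => hd.
  have e : d1 = 1%g by apply: (mulgI c); rewrite hd mulg1.
  by move: d11; rewrite e eqxx.
- move=> hmin.
  have yFR : forall c, c \in CL -> in_FR G1 rho x0 (Defs.act rho c^-1 x0).
    move=> c cCL; have cG : c \in G by apply: (subsetP CLG).
    case: (hmin c cCL) => y [hFR hy].
    have ey : y = Defs.act rho c^-1 x0 by rewrite -hy (actKV hU).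
    by rewrite -ey.
  have nstab : forall b, b \in G1 -> b != 1%g -> b \notin stab G1 rho x0.
    move=> b bG1 b1; rewrite /stab inE bG1 /=; apply: neq1 => //.
    exact: (subsetP sG1).
  have [e1 e10 he1] : exists2 e : R, 0 < e & forall c b, c \in CL -> b \in G1 -> b != 1%g ->
      e <= vnorm (Defs.act rho b (Defs.act rho c^-1 x0) - x0)
                - vnorm (Defs.act rho c^-1 x0 - x0).
    have [e e0 he] : exists2 e : R, 0 < e & forall cb : (gT * gT)%type,
      [&& cb.1 \in CL, cb.2 \in G1 & cb.2 != 1%g] ->
      e <= vnorm (Defs.act rho cb.2 (Defs.act rho cb.1^-1 x0) - x0)
                - vnorm (Defs.act rho cb.1^-1 x0 - x0).
      apply: pos_lb.
      move=> [c b] /= /and3P [cCL bG1 b1]; rewrite subr_gt0.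
      by apply: (yFR c cCL) => //; apply: nstab.
    by exists e => // c b cCL bG1 b1; apply: (he (c, b)); rewrite /= cCL bG1 b1.
  have [e2 e20 he2] : exists2 e : R, 0 < e & forall a c, a \in CL -> c \in CL -> a != c ->
      e <= vnorm (Defs.act rho a (Defs.act rho c^-1 x0) - x0).
    have [e e0 he] : exists2 e : R, 0 < e & forall ac : (gT * gT)%type,
      [&& ac.1 \in CL, ac.2 \in CL & ac.1 != ac.2] ->
      e <= vnorm (Defs.act rho ac.1 (Defs.act rho ac.2^-1 x0) - x0).
      apply: pos_lb.
      move=> [a c] /= /and3P [aCL cCL ac]; rewrite lt_def vnorm_ge0 andbT.
      have aG : a \in G by apply: (subsetP CLG).
      have cG : c \in G by apply: (subsetP CLG).
      apply/eqP => /vnorm_eq0 /eqP; rewrite subr_eq0 (actM hU) ?groupV //.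
      apply/negP; apply: neq1; first by rewrite groupM ?groupV.
      by rewrite -eq_mulgV1.
    by exists e => // a c aCL cCL ac; apply: (he (a, c)); rewrite /= aCL cCL ac.
  exists (Num.min e1 e2 / 2); first by rewrite divr_gt0 // lt_min e10 e20.
  move=> g r gG hnoise d [d1 [d2 [[d1G1 hm1] [d2CL hm2] ->]]].
  have [c cCL hG1'] := cos_ex g gG.
  set h := (c^-1 * g)%g in hG1'.
  have cG : c \in G by apply: (subsetP CLG).
  have hG : h \in G by apply: (subsetP sG1).
  have gE : g = (c * h)%g by rewrite /h mulKVg.
  set yc := Defs.act rho c^-1 x0.
  set E := r - Defs.act rho h^-1 yc.
  have hnu : vnorm E = vnorm (r - Defs.act rho g^-1 x0).
    have gE2 : (h^-1 * c^-1 = g^-1)%g by rewrite -invMg -gE.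
    by rewrite /E /yc (actM hU _ (groupVr hG) (groupVr cG)) gE2.
  have m1 : Num.min e1 e2 <= e1 by rewrite ge_min lexx.
  have m2 : Num.min e1 e2 <= e2 by rewrite ge_min lexx orbT.
  have d1h : d1 = h.
    apply/eqP; apply/negPn/negP => ne.
    set b := (d1 * h^-1)%g.
    have bG1 : b \in G1 by rewrite groupM ?groupV.
    have b1 : b != 1%g by rewrite -eq_mulgV1.
    have d1G : d1 \in G by apply: (subsetP sG1).
    have hb := he1 c b cCL bG1 b1.
    have fh : vnorm (Defs.act rho h r - x0) <= vnorm E + vnorm (yc - x0).
      have -> : Defs.act rho h r - x0 = Defs.act rho h E + (yc - x0).
        by rewrite /E actB (actVK hU) // subrKA.
      by case: (vnorm_tri (Defs.act rho h E) (yc - x0)) => _; rewrite (act_vnorm hU).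
    have fd : vnorm (Defs.act rho b yc - x0) - vnorm E <= vnorm (Defs.act rho d1 r - x0).
      have -> : Defs.act rho d1 r - x0 = (Defs.act rho b yc - x0) + Defs.act rho d1 E.
        rewrite /E actB (actM hU _ d1G (groupVr hG)) -/b [RHS]addrC.
        by rewrite subrKA.
      by case: (vnorm_tri (Defs.act rho b yc - x0) (Defs.act rho d1 E)); rewrite (act_vnorm hU).
    have hle : vnorm (Defs.act rho d1 r - x0) <= vnorm (Defs.act rho h r - x0).
      by case: (hm1 h hG1') => [h1|[h1 _]]; [exact: ltW|rewrite h1; exact: lexx].
    move: hnoise; rewrite -hnu => hnoise.
    exact: (arith1 hnoise m1 hb fh fd hle).
  rewrite d1h in hm2.
  have d2c : d2 = c.
    apply/eqP; apply/negPn/negP => ne.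
    have d2G : d2 \in G by apply: (subsetP CLG).
    have hb := he2 d2 c d2CL cCL ne.
    set z := Defs.act rho h r.
    have zE : z - yc = Defs.act rho h E by rewrite /z /E actB (actVK hU).
    have fc : vnorm (Defs.act rho c z - x0) = vnorm E.
      have -> : Defs.act rho c z - x0 = Defs.act rho c (Defs.act rho h E).
        by rewrite -zE actB /yc (actVK hU).
      by rewrite !(act_vnorm hU).
    have fd : vnorm (Defs.act rho d2 yc - x0) - vnorm E <= vnorm (Defs.act rho d2 z - x0).
      have -> : Defs.act rho d2 z - x0 =
          (Defs.act rho d2 yc - x0) + Defs.act rho d2 (Defs.act rho h E).
        by rewrite -zE actB [RHS]addrC subrKA.
      case: (vnorm_tri (Defs.act rho d2 yc - x0) (Defs.act rho d2 (Defs.act rho h E))).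
      by rewrite !(act_vnorm hU).
    have hle : vnorm (Defs.act rho d2 z - x0) <= vnorm (Defs.act rho c z - x0).
      by case: (hm2 c cCL) => [h1|[h1 _]]; [exact: ltW|rewrite h1; exact: lexx].
    move: hnoise; rewrite -hnu => hnoise.
    exact: (arith2 hnoise m2 hb fd hle fc).
  by rewrite d2c d1h gE.
Qed.
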